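(* There exist continuous functions $f_1,f_2,f_3,f_4:\mathrm{SO}(3)\to\mathbb{R}^3$ such that for every rotation $R\in\mathrm{SO}(3)$, at least one of $\mathbf{R}_{xyz}(f_1(R))$, $\mathbf{R}_{xyz}(f_2(R))$, $\mathbf{R}_{xzy}(f_3(R))$, $\mathbf{R}_{xzy}(f_4(R))$ is equal to $R$.
   Context: Unit quaternions $w+x\mathbf{i}+y\mathbf{j}+z\mathbf{k}$ are identified with $(w,x,y,z)\in S^3$, and $\mathbf{R}_Q:S^3\to\mathrm{SO}(3)$ is $$\mathbf{R}_Q(w,x,y,z)=\begin{bmatrix}1-2y^2-2z^2 & 2(xy-zw) & 2(xz+yw)\\ 2(xy+zw) & 1-2x^2-2z^2 & 2(yz-xw)\\ 2(xz-yw) & 2(yz+xw) & 1-2x^2-2y^2\end{bmatrix}.$$ $\mathbf{R}_{xyz}(\alpha,\beta,\gamma)=\mathbf{R}_Q\big((\cos\frac{\gamma}{2}+\mathbf{k}\sin\frac{\gamma}{2})(\cos\frac{\beta}{2}+\mathbf{j}\sin\frac{\beta}{2})(\cos\frac{\alpha}{2}+\mathbf{i}\sin\frac{\alpha}{2})\big)$ and $\mathbf{R}_{xzy}(\alpha,\beta,\gamma)=\mathbf{R}_Q\big((\cos\frac{\gamma}{2}+\mathbf{j}\sin\frac{\gamma}{2})(\cos\frac{\beta}{2}+\mathbf{k}\sin\frac{\beta}{2})(\cos\frac{\alpha}{2}+\mathbf{i}\sin\frac{\alpha}{2})\big)$ (quaternion products) are the rotations given by extrinsic $x$-$y$-$z$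 and $x$-$z$-$y$ Euler angles respectively. *)

(* Defs.v *)
From HB Require Import structures.
From mathcomp Require Import all_boot all_order all_algebra.
From mathcomp Require Import all_classical all_reals all_analysis.
Set Implicit Arguments. Unset Strict Implicit. Unset Printing Implicit Defensive.
Import Order.TTheory GRing.Theory Num.Theory.
Import numFieldNormedType.Exports.
Local Open Scope ring_scope.

Section Defs.
Variable R : realType.

(* quaternion w + x i + y j + z k represented as (w, x, y, z) *)
Definition quat := (R * R * R * R)%type.

Definition qw (q : quat) : R := q.1.1.1.
Definition qx (q : quat) : R := q.1.1.2.
Definition qy (q : quat) : R := q.1.2.
Definition qz (q : quat) : R := q.2.

Definition qmul (p q : quat) : quat :=
  let: (a1, b1, c1, d1) := p in
  let: (a2, b2, c2, d2) := q in
  (a1*a2 - b1*b2 - c1*c2 - d1*d2,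
   a1*b2 + b1*a2 + c1*d2 - d1*c2,
   a1*c2 - b1*d2 + c1*a2 + d1*b2,
   a1*d2 + b1*c2 - c1*b2 + d1*a2).

Definition RQ (q : quat) : 'M[R]_3 :=
  let w := qw q in let x := qx q in let y := qy q in let z := qz q in
  \matrix_(i < 3, j < 3)
   nth 0 (nth [::]
   [:: [:: 1 - 2*y^+2 - 2*z^+2; 2*(x*y - z*w); 2*(x*z + y*w)];
       [:: 2*(x*y + z*w); 1 - 2*x^+2 - 2*z^+2; 2*(y*z - x*w)];
       [:: 2*(x*z - y*w); 2*(y*z + x*w); 1 - 2*x^+2 - 2*y^+2]] i) j.

Definition qi (t : R) : quat := (cos (t / 2), sin (t / 2), 0, 0).
Definition qj (t : R) : quat := (cos (t / 2), 0, sin (t / 2), 0).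
Definition qk (t : R) : quat := (cos (t / 2), 0, 0, sin (t / 2)).

Definition Rxyz (a b g : R) : 'M[R]_3 := RQ (qmul (qmul (qk g) (qj b)) (qi a)).
Definition Rxzy (a b g : R) : 'M[R]_3 := RQ (qmul (qmul (qj g) (qk b)) (qi a)).

Definition Rxyz_v (v : 'rV[R]_3) : 'M[R]_3 := Rxyz (v 0 0) (v 0 1) (v 0 2).
Definition Rxzy_v (v : 'rV[R]_3) : 'M[R]_3 := Rxzy (v 0 0) (v 0 1) (v 0 2).

Definition SO3 : set 'M[R]_3 := [set M | M^T *m M = 1%:M /\ \det M = 1].

End Defs.

(* Main.v *)
Require Import Defs.
From HB Require Import structures.
From mathcomp Require Import all_boot all_order all_algebra.
From mathcomp Require Import all_classical all_reals all_analysis.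
From mathcomp Require Import ring lra.
Import Order.TTheory GRing.Theory Num.Theory.
Import numFieldNormedType.Exports.
Local Open Scope ring_scope.
Local Open Scope classical_set_scope.

Section S.
Variable R : realType.

Lemma mul3E (A B : 'M[R]_3) i j : (A *m B) i j = A i 0 * B 0 j + A i 1 * B 1 j + A i 2 * B 2 j.
Proof. rewrite mxE !big_ord_recr big_ord0 /= add0r. by congr (A i _ * B _ j + A i _ * B _ j + A i _ * B _ j); apply/val_inj. Qed.

Lemma det2E (A : 'M[R]_2) : \det A = A 0 0 * A 1 1 - A 0 1 * A 1 0.
Proof.
rewrite (expand_det_row _ 0) !big_ord_recr big_ord0 /= add0r /cofactor !det_mx11 !mxE /=.
rewrite !expr0 expr1 mul1r mulN1r mulrN.
by congr (A _ _ * A _ _ - A _ _ * A _ _); apply/val_inj.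
Qed.

Lemma so3_cof (M : 'M[R]_3) : SO3 M -> forall i j, M i j = cofactor M i j.
Proof.
move=> [h1 h2] i j.
have h3 := mulmx1C h1.
have : \adj M = M^T.
  by rewrite -[\adj M]mulmx1 -h3 mulmxA mul_adj_mx h2 mul1mx.
by move/matrixP => /(_ j i); rewrite !mxE => <-.
Qed.

Lemma so3_facts (M : 'M[R]_3) : SO3 M ->
  let m11 := M 0 0 in let m12 := M 0 1 in let m13 := M 0 2 in
  let m21 := M 1 0 in let m22 := M 1 1 in let m23 := M 1 2 in
  let m31 := M 2 0 in let m32 := M 2 1 in let m33 := M 2 2 in
  [/\ m11^+2 + m21^+2 + m31^+2 = 1, m21^+2 + m22^+2 + m23^+2 = 1,
      m31^+2 + m32^+2 + m33^+2 = 1,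
  [/\ m12 = - (m21 * m33 - m23 * m31), m13 = m21 * m32 - m22 * m31 &
      m22 = m11 * m33 - m13 * m31] &
  [/\ m23 = - (m11 * m32 - m12 * m31),
      m32 = - (m11 * m23 - m13 * m21) & m33 = m11 * m22 - m12 * m21]].
Proof.
move=> hM; have hc := @so3_cof M hM; move: hM => [h1 _].
have h3 := mulmx1C h1.
move=> m11 m12 m13 m21 m22 m23 m31 m32 m33.
split.
- move/matrixP: h1 => /(_ 0 0); rewrite mul3E !mxE /=.
  by rewrite /m11 /m21 /m31 -!expr2.
- move/matrixP: h3 => /(_ 1 1); rewrite mul3E !mxE /=.
  by rewrite /m22 /m21 /m23 -!expr2.
- move/matrixP: h3 => /(_ 2 2); rewrite mul3E !mxE /=.
  by rewrite /m32 /m31 /m33 -!expr2.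
- split.
  + rewrite /m12 hc /cofactor det2E !mxE /= -signr_odd (_ : odd _ = true) // expr1 mulN1r.
    by congr (- (M _ _ * M _ _ - M _ _ * M _ _)); apply/val_inj.
  + rewrite /m13 hc /cofactor det2E !mxE /= -signr_odd (_ : odd _ = false) // expr0 mul1r.
    by congr (M _ _ * M _ _ - M _ _ * M _ _); apply/val_inj.
  + rewrite /m22 hc /cofactor det2E !mxE /= -signr_odd (_ : odd _ = false) // expr0 mul1r.
    by congr (M _ _ * M _ _ - M _ _ * M _ _); apply/val_inj.
- split.
  + rewrite /m23 hc /cofactor det2E !mxE /= -signr_odd (_ : odd _ = true) // expr1 mulN1r.
    by congr (- (M _ _ * M _ _ - M _ _ * M _ _)); apply/val_inj.
  + rewrite /m32 hc /cofactor det2E !mxE /= -signr_odd (_ : odd _ = true) // expr1 mulN1r.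
    by congr (- (M _ _ * M _ _ - M _ _ * M _ _)); apply/val_inj.
  + rewrite /m33 hc /cofactor det2E !mxE /= -signr_odd (_ : odd _ = false) // expr0 mul1r.
    by congr (M _ _ * M _ _ - M _ _ * M _ _); apply/val_inj.
Qed.

Lemma ord3_cases (i : 'I_3) : [\/ i = 0, i = 1 | i = 2].
Proof.
case: i => [[|[|[|i]]] Hi]; [constructor 1|constructor 2|constructor 3|by []];
  exact/val_inj.
Qed.

Definition CC (c s : R) := c^+2 - s^+2.
Definition SS (c s : R) := 2 * s * c.
Definition NN (c s : R) := c^+2 + s^+2.

Ltac unlets := repeat match goal with x := _ |- _ => subst x end.
Ltac rwN := repeat match goal with h : NN _ _ = 1 |- _ => rewrite h end.
Ltac tr t := transitivity t; [unlets; rewrite /CC /SS /NN; ring | rwN; ring].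

Lemma rq_xyz ca sa cb sb cg sg : NN ca sa = 1 -> NN cb sb = 1 -> NN cg sg = 1 ->
  let CA := CC ca sa in let SA := SS ca sa in
  let CB := CC cb sb in let SB := SS cb sb in
  let CG := CC cg sg in let SG := SS cg sg in
  RQ (qmul (qmul (cg, 0, 0, sg) (cb, 0, sb, 0)) (ca, sa, 0, 0)) =
  \matrix_(i < 3, j < 3) nth 0 (nth [::]
   [:: [:: CG * CB; - SG * CA + CG * SB * SA; SG * SA + CG * SB * CA];
       [:: SG * CB; CG * CA + SG * SB * SA; - CG * SA + SG * SB * CA];
       [:: - SB; CB * SA; CB * CA]] i) j :> 'M[R]_3.
Proof.
move=> hA hB hG CA SA CB SB CG SG.
apply/matrixP => i j; rewrite !mxE /qmul /qw /qx /qy /qz.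
case: i => [[|[|[|i]]] Hi] //=; case: j => [[|[|[|j]]] Hj] //=.
- tr (1 - NN ca sa * NN cb sb * NN cg sg + CG * CB * NN ca sa).
- tr (- SG * NN cb sb * CA + CG * SB * SA).
- tr (SG * NN cb sb * SA + CG * SB * CA).
- tr (SG * CB * NN ca sa).
- tr (1 - NN ca sa * NN cb sb * NN cg sg + CG * NN cb sb * CA + SG * SB * SA).
- tr (- CG * NN cb sb * SA + SG * SB * CA).
- tr (- NN cg sg * SB * NN ca sa).
- tr (NN cg sg * CB * SA).
- tr (1 - NN ca sa * NN cb sb * NN cg sg + NN cg sg * CB * CA).
Qed.

Lemma rq_xzy ca sa cb sb cg sg : NN ca sa = 1 -> NN cb sb = 1 -> NN cg sg = 1 ->
  let CA := CC ca sa in let SA := SS ca sa in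
  let CB := CC cb sb in let SB := SS cb sb in
  let CG := CC cg sg in let SG := SS cg sg in
  RQ (qmul (qmul (cg, 0, sg, 0) (cb, 0, 0, sb)) (ca, sa, 0, 0)) =
  \matrix_(i < 3, j < 3) nth 0 (nth [::]
   [:: [:: CG * CB; - CG * SB * CA + SG * SA; CG * SB * SA + SG * CA];
       [:: SB; CB * CA; - CB * SA];
       [:: - SG * CB; SG * SB * CA + CG * SA; - SG * SB * SA + CG * CA]] i) j :> 'M[R]_3.
Proof.
move=> hA hB hG CA SA CB SB CG SG.
apply/matrixP => i j; rewrite !mxE /qmul /qw /qx /qy /qz.
case: i => [[|[|[|i]]] Hi] //=; case: j => [[|[|[|j]]] Hj] //=.
- tr (1 - NN ca sa * NN cb sb * NN cg sg + CG * CB * NN ca sa).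
- tr (- CG * SB * CA + SG * NN cb sb * SA).
- tr (CG * SB * SA + SG * NN cb sb * CA).
- tr (NN cg sg * SB * NN ca sa).
- tr (1 - NN ca sa * NN cb sb * NN cg sg + NN cg sg * CB * CA).
- tr (- NN cg sg * CB * SA).
- tr (- SG * CB * NN ca sa).
- tr (SG * SB * CA + CG * NN cb sb * SA).
- tr (1 - NN ca sa * NN cb sb * NN cg sg - SG * SB * SA + CG * NN cb sb * CA).
Qed.

Lemma xyz_stage2 (M : 'M[R]_3) : SO3 M -> forall r, 0 < r -> r^+2 = 1 - M 2 0 ^+ 2 ->
  forall CA SA CB SB CG SG : R,
  CA = M 2 2 / r -> SA = M 2 1 / r -> CB = r -> SB = - M 2 0 ->
  CG = M 0 0 / r -> SG = M 1 0 / r ->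
  \matrix_(i < 3, j < 3) nth 0 (nth [::]
   [:: [:: CG * CB; - SG * CA + CG * SB * SA; SG * SA + CG * SB * CA];
       [:: SG * CB; CG * CA + SG * SB * SA; - CG * SA + SG * SB * CA];
       [:: - SB; CB * SA; CB * CA]] i) j = M.
Proof.
move=> hM r r0 hr CA SA CB SB CG SG -> -> -> -> -> ->.
have [n1 n2 n3 [c12 c13 c22] [c23 c32 c33]] := @so3_facts M hM.
have rn : r != 0 by rewrite gt_eqF.
have r2n : r^+2 != 0 by rewrite expf_neq0.
have e12 : M 0 1 = (- M 0 0 * M 2 0 * M 2 1 - M 1 0 * M 2 2) / r^+2.
  apply/(mulIf r2n); rewrite divfK // hr.
  by move: c12; rewrite c23 => e; lra.
have e13 : M 0 2 = (M 1 0 * M 2 1 - M 0 0 * M 2 0 * M 2 2) / r^+2.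
  apply/(mulIf r2n); rewrite divfK // hr.
  by move: c13; rewrite c22 => e; lra.
have e22 : M 1 1 = (M 0 0 * M 2 2 - M 1 0 * M 2 0 * M 2 1) / r^+2.
  apply/(mulIf r2n); rewrite divfK // hr.
  by move: c22; rewrite c13 => e; lra.
have e23 : M 1 2 = (- M 1 0 * M 2 0 * M 2 2 - M 0 0 * M 2 1) / r^+2.
  apply/(mulIf r2n); rewrite divfK // hr.
  by move: c23; rewrite c12 => e; lra.
apply/matrixP => i j; rewrite !mxE.
case: (ord3_cases i) => ->; case: (ord3_cases j) => -> /=;
  rewrite ?e12 ?e13 ?e22 ?e23.
all: try (by field).
Qed.

Lemma xzy_stage2 (M : 'M[R]_3) : SO3 M -> forall r, 0 < r -> r^+2 = 1 - M 1 0 ^+ 2 ->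
  forall CA SA CB SB CG SG : R,
  CA = M 1 1 / r -> SA = - M 1 2 / r -> CB = r -> SB = M 1 0 ->
  CG = M 0 0 / r -> SG = - M 2 0 / r ->
  \matrix_(i < 3, j < 3) nth 0 (nth [::]
   [:: [:: CG * CB; - CG * SB * CA + SG * SA; CG * SB * SA + SG * CA];
       [:: SB; CB * CA; - CB * SA];
       [:: - SG * CB; SG * SB * CA + CG * SA; - SG * SB * SA + CG * CA]] i) j = M.
Proof.
move=> hM r r0 hr CA SA CB SB CG SG -> -> -> -> -> ->.
have [n1 n2 n3 [c12 c13 c22] [c23 c32 c33]] := @so3_facts M hM.
have rn : r != 0 by rewrite gt_eqF.
have r2n : r^+2 != 0 by rewrite expf_neq0.
have e12 : M 0 1 = (- M 0 0 * M 1 0 * M 1 1 + M 1 2 * M 2 0) / r^+2.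
  apply/(mulIf r2n); rewrite divfK // hr.
  by move: c12; rewrite c33 => e; lra.
have e13 : M 0 2 = (- M 0 0 * M 1 0 * M 1 2 - M 1 1 * M 2 0) / r^+2.
  apply/(mulIf r2n); rewrite divfK // hr.
  by move: c13; rewrite c32 => e; lra.
have e32 : M 2 1 = (- M 0 0 * M 1 2 - M 1 0 * M 1 1 * M 2 0) / r^+2.
  apply/(mulIf r2n); rewrite divfK // hr.
  by move: c32; rewrite c13 => e; lra.
have e33 : M 2 2 = (M 0 0 * M 1 1 - M 1 0 * M 1 2 * M 2 0) / r^+2.
  apply/(mulIf r2n); rewrite divfK // hr.
  by move: c33; rewrite c12 => e; lra.
apply/matrixP => i j; rewrite !mxE.
case: (ord3_cases i) => ->; case: (ord3_cases j) => -> /=;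
  rewrite ?e12 ?e13 ?e32 ?e33.
all: try (by field).
Qed.

Lemma half_std (r x y : R) : 0 < r -> x^+2 + y^+2 = r^+2 -> 0 < r + x ->
  [/\ NN (cos ((2 * atan (y / (r + x))) / 2)) (sin ((2 * atan (y / (r + x))) / 2)) = 1, CC (cos ((2 * atan (y / (r + x))) / 2)) (sin ((2 * atan (y / (r + x))) / 2)) = x / r &
      SS (cos ((2 * atan (y / (r + x))) / 2)) (sin ((2 * atan (y / (r + x))) / 2)) = y / r].
Proof.
move=> r0 hxy d0; set t := ((2 * atan (y / (r + x))) / 2).
have -> : t = atan (y / (r + x)) by rewrite /t mulrC mulKf.
set u := y / (r + x).
have h1u : 0 < 1 + u^+2 by rewrite ltr_pwDl // sqr_ge0.
have hc : cos (atan u) ^+ 2 = (1 + u^+2)^-1.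
  by rewrite cos_atan exprVn sqr_sqrtr // ltW.
have cpos : 0 < cos (atan u) by rewrite cos_atan invr_gt0 sqrtr_gt0.
have hs : sin (atan u) = u * cos (atan u).
  have [_ ht] := atan_def u; move: ht; rewrite /tan => ht.
  by rewrite -{2}ht divfK // gt_eqF.
have dn : r + x != 0 by rewrite gt_eqF.
have rn : r != 0 by rewrite gt_eqF.
have un : 1 + u^+2 != 0 by rewrite gt_eqF.
have k0 : r^+2 - x^+2 - y^+2 = 0 by rewrite -hxy; ring.
have k1 : (1 - u^+2) * r = x * (1 + u^+2).
  apply/eqP; rewrite -subr_eq0; apply/eqP.
  have -> : (1 - u^+2) * r - x * (1 + u^+2) = (r + x) * (r^+2 - x^+2 - y^+2) / (r + x)^+2.
    by rewrite /u; field.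
  by rewrite k0 mulr0 mul0r.
have k2 : 2 * u * r = y * (1 + u^+2).
  apply/eqP; rewrite -subr_eq0; apply/eqP.
  have -> : 2 * u * r - y * (1 + u^+2) = y * (r^+2 - x^+2 - y^+2) / (r + x)^+2.
    by rewrite /u; field.
  by rewrite k0 mulr0 mul0r.
rewrite /NN /CC /SS hs; split.
- by rewrite exprMn -[X in X + _]mul1r -mulrDl mulrC hc mulVf.
- rewrite exprMn -[X in X - _]mul1r -mulrBl hc.
  apply/(mulIf rn); rewrite divfK //.
  by rewrite mulrAC k1 mulfK.
- apply/(mulIf rn); rewrite divfK //.
  have -> : 2 * (u * cos (atan u)) * cos (atan u) * r = 2 * u * r * cos (atan u) ^+ 2 by ring.
  by rewrite k2 hc -mulrA mulfV // mulr1.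
Qed.

Lemma half_sh (r x y : R) : 0 < r -> x^+2 + y^+2 = r^+2 -> 0 < r - x ->
  [/\ NN (cos ((pi + 2 * atan (- y / (r - x))) / 2)) (sin ((pi + 2 * atan (- y / (r - x))) / 2)) = 1, CC (cos ((pi + 2 * atan (- y / (r - x))) / 2)) (sin ((pi + 2 * atan (- y / (r - x))) / 2)) = x / r &
      SS (cos ((pi + 2 * atan (- y / (r - x))) / 2)) (sin ((pi + 2 * atan (- y / (r - x))) / 2)) = y / r].
Proof.
move=> r0 hxy d0; set t := ((pi + 2 * atan (- y / (r - x))) / 2).
have hxy' : (- x)^+2 + (- y)^+2 = r^+2 by rewrite !sqrrN.
have := @half_std r (- x) (- y) r0 hxy' d0.
set a := atan _.
have -> : t = a + pi / 2 by rewrite /t /a; field.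
have -> : (2 * a) / 2 = a by rewrite mulrC mulKf.
rewrite cosDpihalf sinDpihalf /NN /CC /SS => -[h1 h2 h3]; split.
- by rewrite sqrrN addrC.
- by rewrite sqrrN -opprB h2 mulNr opprK.
- have -> : 2 * cos a * - sin a = - (2 * sin a * cos a) by ring.
  by rewrite h3 mulNr opprK.
Qed.

End S.

Section S2.
Variable R : realType.

Definition rX (M : 'M[R]_3) := Num.sqrt (1 - M 2 0 ^+ 2).
Definition rZ (M : 'M[R]_3) := Num.sqrt (1 - M 1 0 ^+ 2).
Definition angS (n d e : R) := 2 * atan (n / Num.max d e).
Definition angP (n d e : R) := pi + 2 * atan (n / Num.max d e).
Definition vec3 (a b c : R) : 'rV[R]_3 := \row_(j < 3) nth 0 [:: a; b; c] j.

Lemma vec3E0 a b c : vec3 a b c 0 0 = a. Proof. by rewrite !mxE. Qed.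
Lemma vec3E1 a b c : vec3 a b c 0 1 = b. Proof. by rewrite !mxE. Qed.
Lemma vec3E2 a b c : vec3 a b c 0 2 = c. Proof. by rewrite !mxE. Qed.

Definition betaX (M : 'M[R]_3) := angS (- M 2 0) (1 + rX M) 1.
Definition gamX (M : 'M[R]_3) := angS (M 1 0) (rX M + M 0 0) (1/4).
Definition fA (M : 'M[R]_3) := vec3 (angS (M 2 1) (rX M + M 2 2) (1/8)) (betaX M) (gamX M).
Definition fB (M : 'M[R]_3) := vec3 (angP (- M 2 1) (rX M - M 2 2) (1/8)) (betaX M) (gamX M).
Definition betaZ (M : 'M[R]_3) := angS (M 1 0) (1 + rZ M) 1.
Definition gamZ (M : 'M[R]_3) := angP (M 2 0) (rZ M - M 0 0) (1/4).
Definition fC (M : 'M[R]_3) := vec3 (angS (- M 1 2) (rZ M + M 1 1) (1/8)) (betaZ M) (gamZ M).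
Definition fD (M : 'M[R]_3) := vec3 (angP (M 1 2) (rZ M - M 1 1) (1/8)) (betaZ M) (gamZ M).

Lemma rX_facts M : SO3 M -> [/\ 0 <= rX M, rX M ^+ 2 = 1 - M 2 0 ^+ 2,
   M 0 0 ^+ 2 + M 1 0 ^+ 2 = rX M ^+ 2 & M 2 2 ^+ 2 + M 2 1 ^+ 2 = rX M ^+ 2].
Proof.
move=> hM; have [n1 n2 n3 _ _] := @so3_facts R M hM.
have h0 : 0 <= 1 - M 2 0 ^+ 2 by have := sqr_ge0 (M 1 0); have := sqr_ge0 (M 0 0); lra.
have e : rX M ^+ 2 = 1 - M 2 0 ^+ 2 by rewrite sqr_sqrtr.
split => //; first exact: sqrtr_ge0.
- by rewrite e; lra.
- by rewrite e; lra.
Qed.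

Lemma rZ_facts M : SO3 M -> [/\ 0 <= rZ M, rZ M ^+ 2 = 1 - M 1 0 ^+ 2,
   M 0 0 ^+ 2 + M 2 0 ^+ 2 = rZ M ^+ 2 & M 1 1 ^+ 2 + M 1 2 ^+ 2 = rZ M ^+ 2].
Proof.
move=> hM; have [n1 n2 n3 _ _] := @so3_facts R M hM.
have h0 : 0 <= 1 - M 1 0 ^+ 2 by have := sqr_ge0 (M 2 0); have := sqr_ge0 (M 0 0); lra.
have e : rZ M ^+ 2 = 1 - M 1 0 ^+ 2 by rewrite sqr_sqrtr.
split => //; first exact: sqrtr_ge0.
- by rewrite e; lra.
- by rewrite e; lra.
Qed.

Lemma le_of_sq (a r : R) : 0 <= r -> a ^+ 2 <= r ^+ 2 -> a <= r.
Proof. move=> r0 h; nra. Qed.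

Lemma chartA M : SO3 M -> 1/4 <= rX M + M 0 0 -> 1/8 <= rX M + M 2 2 ->
  Rxyz_v (fA M) = M.
Proof.
move=> hM h1 h2.
have [r0 hr2 hc1 hr3] := @rX_facts M hM.
have m11r : M 0 0 <= rX M by apply: le_of_sq => //; rewrite -hc1; have := sqr_ge0 (M 1 0); lra.
have rp : 0 < rX M by lra.
have [a1 a2 a3] := @half_std R (rX M) (M 2 2) (M 2 1) rp hr3 ltac:(lra).
have [b1 b2 b3] := @half_std R 1 (rX M) (- M 2 0) ltr01 ltac:(rewrite sqrrN; lra) ltac:(lra).
have [g1 g2 g3] := @half_std R (rX M) (M 0 0) (M 1 0) rp hc1 ltac:(lra).
rewrite /Rxyz_v /fA; rewrite vec3E0 vec3E1 vec3E2.
rewrite /Rxyz /qk /qj /qi /betaX /gamX /angS.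
rewrite (max_idPl h2) (max_idPl h1) (max_idPl (_ : 1 <= 1 + rX M)); last by lra.
rewrite rq_xyz //.
apply: (@xyz_stage2 R M hM _ rp hr2) => //.
- by rewrite b2 divr1.
- by rewrite b3 divr1.
Qed.

Lemma chartB M : SO3 M -> 1/4 <= rX M + M 0 0 -> 1/8 <= rX M - M 2 2 ->
  Rxyz_v (fB M) = M.
Proof.
move=> hM h1 h2.
have [r0 hr2 hc1 hr3] := @rX_facts M hM.
have m11r : M 0 0 <= rX M by apply: le_of_sq => //; rewrite -hc1; have := sqr_ge0 (M 1 0); lra.
have rp : 0 < rX M by lra.
have [a1 a2 a3] := @half_sh R (rX M) (M 2 2) (M 2 1) rp hr3 ltac:(lra).
have [b1 b2 b3] := @half_std R 1 (rX M) (- M 2 0) ltr01 ltac:(rewrite sqrrN; lra) ltac:(lra).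
have [g1 g2 g3] := @half_std R (rX M) (M 0 0) (M 1 0) rp hc1 ltac:(lra).
rewrite /Rxyz_v /fB vec3E0 vec3E1 vec3E2.
rewrite /Rxyz /qk /qj /qi /betaX /gamX /angS /angP.
rewrite (max_idPl h2) (max_idPl h1) (max_idPl (_ : 1 <= 1 + rX M)); last by lra.
rewrite rq_xyz //.
apply: (@xyz_stage2 R M hM _ rp hr2) => //.
- by rewrite b2 divr1.
- by rewrite b3 divr1.
Qed.

Lemma chartC M : SO3 M -> 1/4 <= rZ M - M 0 0 -> 1/8 <= rZ M + M 1 1 ->
  Rxzy_v (fC M) = M.
Proof.
move=> hM h1 h2.
have [r0 hr2 hc1 hr3] := @rZ_facts M hM.
have m11r : - M 0 0 <= rZ M by apply: le_of_sq => //; rewrite sqrrN -hc1; have := sqr_ge0 (M 2 0); lra.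
have rp : 0 < rZ M by lra.
have [a1 a2 a3] := @half_std R (rZ M) (M 1 1) (- M 1 2) rp ltac:(rewrite sqrrN; lra) ltac:(lra).
have [b1 b2 b3] := @half_std R 1 (rZ M) (M 1 0) ltr01 ltac:(lra) ltac:(lra).
have [g1 g2 g3] := @half_sh R (rZ M) (M 0 0) (- M 2 0) rp ltac:(rewrite sqrrN; lra) ltac:(lra).
rewrite opprK in g1 g2 g3.
rewrite /Rxzy_v /fC vec3E0 vec3E1 vec3E2.
rewrite /Rxzy /qk /qj /qi /betaZ /gamZ /angS /angP.
rewrite (max_idPl h2) (max_idPl h1) (max_idPl (_ : 1 <= 1 + rZ M)); last by lra.
rewrite rq_xzy //.
apply: (@xzy_stage2 R M hM _ rp hr2) => //.
- by rewrite b2 divr1.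
- by rewrite b3 divr1.
Qed.

Lemma chartD M : SO3 M -> 1/4 <= rZ M - M 0 0 -> 1/8 <= rZ M - M 1 1 ->
  Rxzy_v (fD M) = M.
Proof.
move=> hM h1 h2.
have [r0 hr2 hc1 hr3] := @rZ_facts M hM.
have m11r : - M 0 0 <= rZ M by apply: le_of_sq => //; rewrite sqrrN -hc1; have := sqr_ge0 (M 2 0); lra.
have rp : 0 < rZ M by lra.
have [a1 a2 a3] := @half_sh R (rZ M) (M 1 1) (- M 1 2) rp ltac:(rewrite sqrrN; lra) ltac:(lra).
rewrite opprK in a1 a2 a3.
have [b1 b2 b3] := @half_std R 1 (rZ M) (M 1 0) ltr01 ltac:(lra) ltac:(lra).
have [g1 g2 g3] := @half_sh R (rZ M) (M 0 0) (- M 2 0) rp ltac:(rewrite sqrrN; lra) ltac:(lra).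
rewrite opprK in g1 g2 g3.
rewrite /Rxzy_v /fD vec3E0 vec3E1 vec3E2.
rewrite /Rxzy /qk /qj /qi /betaZ /gamZ /angS /angP.
rewrite (max_idPl h2) (max_idPl h1) (max_idPl (_ : 1 <= 1 + rZ M)); last by lra.
rewrite rq_xzy //.
apply: (@xzy_stage2 R M hM _ rp hr2) => //.
- by rewrite b2 divr1.
- by rewrite b3 divr1.
Qed.

Lemma cover4 M : SO3 M ->
  [\/ Rxyz_v (fA M) = M, Rxyz_v (fB M) = M,
      Rxzy_v (fC M) = M | Rxzy_v (fD M) = M].
Proof.
move=> hM.
have [x0 x2 xc1 xr3] := @rX_facts M hM.
have [z0 z2 zc1 zr2] := @rZ_facts M hM.
have m11x : M 0 0 <= rX M by apply: le_of_sq => //; rewrite -xc1; have := sqr_ge0 (M 1 0); lra.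
have m11z : - M 0 0 <= rZ M by apply: le_of_sq => //; rewrite sqrrN -zc1; have := sqr_ge0 (M 2 0); lra.
have m33x : M 2 2 <= rX M by apply: le_of_sq => //; rewrite -xr3; have := sqr_ge0 (M 2 1); lra.
have m33x' : - M 2 2 <= rX M by apply: le_of_sq => //; rewrite sqrrN -xr3; have := sqr_ge0 (M 2 1); lra.
have m22z : M 1 1 <= rZ M by apply: le_of_sq => //; rewrite -zr2; have := sqr_ge0 (M 1 2); lra.
have m22z' : - M 1 1 <= rZ M by apply: le_of_sq => //; rewrite sqrrN -zr2; have := sqr_ge0 (M 1 2); lra.
have [h1|h1] := lerP (1/4) (rX M + M 0 0).
  have [h2|h2] := lerP (1/8) (rX M + M 2 2).
    by constructor 1; apply: chartA.
  by constructor 2; apply: chartB => //; lra.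
have hs : 1 <= rX M ^+ 2 + rZ M ^+ 2.
  by rewrite x2 z2; have [n1 _ _ _ _] := @so3_facts R M hM; have := sqr_ge0 (M 0 0); lra.
have h1' : 1/4 <= rZ M - M 0 0 by nra.
have [h2|h2] := lerP (1/8) (rZ M + M 1 1).
  by constructor 3; apply: chartC.
by constructor 4; apply: chartD => //; lra.
Qed.
End S2.

Arguments vec3 {R}. Arguments angS {R}. Arguments angP {R}.
Section S3.
Variable R : realType.

Lemma vec3_sum (a b c : R) : vec3 a b c = a *: vec3 1 0 0 + b *: vec3 0 1 0 + c *: vec3 0 0 1.
Proof.
apply/matrixP => i j; rewrite !mxE.
case: (ord3_cases j) => -> /=; ring.
Qed.

Lemma cont_vec3 (a b c : 'M[R]_3 -> R) : continuous a -> continuous b -> continuous c ->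
  continuous (fun M => vec3 (a M) (b M) (c M)).
Proof.
move=> ca cb cc.
have -> : (fun M => vec3 (a M) (b M) (c M)) =
  (fun M => a M *: vec3 1 0 0 + b M *: vec3 0 1 0 + c M *: vec3 0 0 1).
  by apply: funext => M; rewrite vec3_sum.
move=> x.
apply: (@continuousD _ _ _ (fun M => a M *: vec3 1 0 0 + b M *: vec3 0 1 0) (fun M => c M *: vec3 0 0 1)).
  apply: (@continuousD _ _ _ (fun M => a M *: vec3 1 0 0) (fun M => b M *: vec3 0 1 0)).
    exact: (@continuousZr_tmp _ _ _ a (vec3 1 0 0) x (ca x)).
  exact: (@continuousZr_tmp _ _ _ b (vec3 0 1 0) x (cb x)).
exact: (@continuousZr_tmp _ _ _ c (vec3 0 0 1) x (cc x)).
Qed.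

Lemma cont_r i j : continuous (fun M : 'M[R]_3 => Num.sqrt (1 - M i j ^+ 2)).
Proof.
move=> x; apply: (@continuous_comp _ _ _ (fun M : 'M[R]_3 => 1 - M i j ^+ 2) (@Num.sqrt R)).
  apply: continuousB; first exact: cst_continuous.
  rewrite /GRing.exp /=. apply: continuousM; exact: coord_continuous.
exact: sqrt_continuous.
Qed.

Lemma cont_angS (n d : 'M[R]_3 -> R) e : 0 < e -> continuous n -> continuous d ->
  continuous (fun M => angS (n M) (d M) e).
Proof.
move=> e0 cn cd x; rewrite /angS.
apply: (@continuousM _ _ (fun=> 2) (fun M => atan (n M / Num.max (d M) e)) x).
  exact: cst_continuous.
apply: (@continuous_comp _ _ _ (fun M => n M / Num.max (d M) e) atan x); last exact: continuous_atan.
apply: (@continuousM _ _ n (fun M => (Num.max (d M) e)^-1) x); first exact: cn.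
apply: (@continuousV _ _ (fun M => Num.max (d M) e) x).
  by rewrite gt_eqF // lt_max e0 orbT.
apply: (@continuous_max _ _ d (fun=> e) x); [exact: cd | exact: cst_continuous].
Qed.


Lemma cont_angP (n d : 'M[R]_3 -> R) e : 0 < e -> continuous n -> continuous d ->
  continuous (fun M => angP (n M) (d M) e).
Proof.
move=> e0 cn cd x; rewrite /angP.
apply: (@continuousD _ _ _ (fun=> pi) (fun M => angS (n M) (d M) e) x).
  exact: cst_continuous.
exact: cont_angS.
Qed.

End S3.

Section S4.
Variable R : realType.

Lemma cont_add (f g : 'M[R]_3 -> R) : continuous f -> continuous g -> continuous (fun M => f M + g M).
Proof. move=> cf cg x; apply: (@continuousD _ _ _ f g x); [exact: cf|exact: cg]. Qed.
Lemma cont_opp (f : 'M[R]_3 -> R) : continuous f -> continuous (fun M => - f M).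
Proof. move=> cf x; apply: (@continuousN _ _ _ f x); exact: cf. Qed.
Lemma cont_ent i j : continuous (fun M : 'M[R]_3 => M i j).
Proof. exact: coord_continuous. Qed.
Lemma cont_rX : continuous (@rX R).
Proof. exact: cont_r. Qed.
Lemma cont_rZ : continuous (@rZ R).
Proof. exact: cont_r. Qed.

Ltac cont := repeat first
  [ apply: cont_add | apply: cont_opp | apply: cont_ent | apply: cont_rX | apply: cont_rZ
  | apply: cst_continuous | apply: cont_angS | apply: cont_angP | lra ].

Lemma cont_fA : continuous (@fA R).
Proof. apply: cont_vec3; rewrite /betaX /gamX; cont. Qed.
Lemma cont_fB : continuous (@fB R).
Proof. apply: cont_vec3; rewrite /betaX /gamX; cont. Qed.
Lemma cont_fC : continuous (@fC R).
Proof. apply: cont_vec3; rewrite /betaZ /gamZ; cont. Qed.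
Lemma cont_fD : continuous (@fD R).
Proof. apply: cont_vec3; rewrite /betaZ /gamZ; cont. Qed.
End S4.

Theorem theorem8 (R : realType) :
  exists f1 f2 f3 f4 : 'M[R]_3 -> 'rV[R]_3,
    [/\ {within @SO3 R, continuous f1}, {within @SO3 R, continuous f2},
        {within @SO3 R, continuous f3}, {within @SO3 R, continuous f4} &
        forall M : 'M[R]_3, @SO3 R M ->
          [\/ Rxyz_v (f1 M) = M, Rxyz_v (f2 M) = M,
              Rxzy_v (f3 M) = M | Rxzy_v (f4 M) = M]].
Proof.
exists (@fA R), (@fB R), (@fC R), (@fD R); split.
- exact/continuous_subspaceT/cont_fA.
- exact/continuous_subspaceT/cont_fB.
- exact/continuous_subspaceT/cont_fC.
- exact/continuous_subspaceT/cont_fD.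
- move=> M hM; exact: (@cover4 R M hM).
Qed.
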